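(* Let $0\le \rho_m\le\rho_M\le\rho_{\max}$ and let $g,v,w_\eta$ satisfy the standing assumptions (A) below. Let $h>0$, $N\in\mathbb{N}$ with $Nh=\eta$, and let a quadrature rule with nodes $y_1,\dots,y_R\in[0,1]$, $y_R=1$, and weights $\gamma_1,\dots,\gamma_R>0$, $\sum_{\nu=1}^R\gamma_\nu=1$, be given, such that $$h\sum_{k=0}^{N-1}\sum_{\nu=1}^{R}\gamma_\nu\, w_\eta^{\nu,k}=1,\qquad w_\eta^{\nu,k}:=w_\eta\big((k+y_\nu)h\big).$$ Suppose that at time $t^n$ we are given cell averages $\bar\rho_j^n\in[\rho_m,\rho_M]$ ($j\in\mathbb{Z}$) and, for every $l\in\mathbb{Z}$, a polynomial $P_l$ on $I_l=[x_{l-1/2},x_{l+1/2}]$ (with $x_{l+1/2}-x_{l-1/2}=h$) such that $\frac1h\int_{I_l}P_l(x)\,dx=\bar\rho_l^n$, the quadrature rule is exact for $P_l$, i.e. $\frac1h\int_{I_l}P_l\,dx=\sum_{\nu}\gamma_\nu P_l(x_{l-1/2}+y_\nu h)$, and all reconstructed values $\rho_l^\nu:=P_l(x_{l-1/2}+y_\nu h)$ lie in $[\rho_m,\rho_M]$. Define $\rho^-_{j+1/2}:=P_j(x_{j+1/2})\,(=\rho_j^R)$, $$V_{j+1/2}:=v\Big(h\sum_{k=0}^{N-1}\sum_{\nu=1}^R\gamma_\nu w_\eta^{\nu,k}\rho^\nu_{j+k+1}\Big),$$ and, for $\tau>0$, the forward Euler update $$\bar\rho_j^{n+1}=\bar\rho_j^n-\frac{\tau}{h}\Big(V_{j+1/2}\,g(\rho^-_{j+1/2})-V_{j-1/2}\,g(\rho^-_{j-1/2})\Big),\quad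 j\in\mathbb{Z}.$$ If $$\tau\le\frac{\gamma_R h}{\gamma_R h\, w_\eta(0)\,\|v'\|\,\|g\|+\|v\|\,\|g'\|},$$ where $\|\cdot\|$ denotes the sup norm on $[0,\rho_{\max}]$, then $\rho_m\le\bar\rho_j^{n+1}\le\rho_M$ for all $j\in\mathbb{Z}$.
   Context: Standing assumptions (A): $\rho_{\max}>0$, $\eta>0$; $g\in C^1([0,\rho_{\max}];\mathbb{R}_{\ge0})$ with $g'\ge0$; $v\in C^1([0,\rho_{\max}];\mathbb{R}_{\ge0})$ with $v'\le0$; $w_\eta\in C^1([0,\eta];\mathbb{R}_{\ge0})$ with $w_\eta'\le0$ and $\int_0^\eta w_\eta(x)\,dx=1$. These arise from the non-local conservation law $\rho_t+(g(\rho)v(\rho*w_\eta))_x=0$ with $(\rho*w_\eta)(t,x)=\int_x^{x+\eta}w_\eta(y-x)\rho(t,y)\,dy$, discretized on a uniform grid $x_j=x_0+jh$, $x_{j\pm1/2}=x_j\pm h/2$. *)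

(* Defs.v *)
From Stdlib Require Import Reals Lra ZArith List.
Open Scope R_scope.

Fixpoint rsum (n : nat) (f : nat -> R) : R :=
  match n with O => 0 | S m => rsum m f + f m end.

(* polynomial given by its coefficient list [a0; a1; ...], Horner evaluation *)
Fixpoint peval (c : list R) (x : R) : R :=
  match c with nil => 0 | a :: c' => a + x * peval c' x end.

Definition cont_on (f : R -> R) (a b : R) : Prop :=
  forall x, a <= x <= b -> limit1_in f (fun z => a <= z <= b) (f x) x.

Definition C1_on (f df : R -> R) (a b : R) : Prop :=
  cont_on f a b /\ cont_on df a b /\
  (forall x, a < x < b -> derivable_pt_lim f x (df x)).

Definition is_supnorm (f : R -> R) (a b nrm : R) : Prop :=
  is_lub (fun y => exists x, a <= x <= b /\ y = Rabs (f x)) nrm.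

(* grid: x_j = x0 + j h ; x_{j+1/2} = x0 + j h + h/2 *)
Definition xmid (x0 h : R) (j : Z) : R := x0 + IZR j * h.
Definition xhalf (x0 h : R) (j : Z) : R := xmid x0 h j + h / 2.

Definition recon (x0 h : R) (y : nat -> R) (P : Z -> list R) (l : Z) (nu : nat) : R :=
  peval (P l) (xmid x0 h l - h / 2 + y nu * h).

(* V_{j+1/2}; quadrature nodes/weights indexed nu = 1..Rn *)
Definition Vface (v w : R -> R) (h : R) (N Rn : nat) (gam y : nat -> R)
    (x0 : R) (P : Z -> list R) (j : Z) : R :=
  v (h * rsum N (fun k => rsum Rn (fun i =>
        gam (S i) * w ((INR k + y (S i)) * h) *
        recon x0 h y P (j + Z.of_nat k + 1)%Z (S i)))).

Definition euler_update (g v w : R -> R) (h tau : R) (N Rn : nat)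
    (gam y : nat -> R) (x0 : R) (P : Z -> list R) (rbar : Z -> R) (j : Z) : R :=
  rbar j - tau / h *
    (Vface v w h N Rn gam y x0 P j * g (peval (P j) (xhalf x0 h j))
     - Vface v w h N Rn gam y x0 P (j - 1)%Z
         * g (peval (P (j - 1)%Z) (xhalf x0 h (j - 1)%Z))).

(* Main.v *)
Require Import Defs.
From Stdlib Require Import Reals Lra Lia ZArith List.
Open Scope R_scope.

Lemma clamp_in a b t : a <= b -> a <= Rmax a (Rmin b t) <= b.
Proof. intros; unfold Rmax, Rmin; repeat destruct Rle_dec; lra. Qed.

Lemma clamp_id a b t : a <= t <= b -> Rmax a (Rmin b t) = t.
Proof. intros; unfold Rmax, Rmin; repeat destruct Rle_dec; lra. Qed.

Lemma clamp_lip a b t z : a <= b -> a <= z <= b ->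
  Rabs (Rmax a (Rmin b t) - z) <= Rabs (t - z).
Proof. intros; unfold Rmax, Rmin; repeat destruct Rle_dec;
  unfold Rabs; repeat destruct Rcase_abs; lra. Qed.

Lemma clamp_cont f a b z : a <= b -> cont_on f a b -> a <= z <= b ->
  continuity_pt (fun t => f (Rmax a (Rmin b t))) z.
Proof.
  intros Hab Hc Hz. unfold continuity_pt, continue_in, limit1_in, limit_in.
  intros eps He. destruct (Hc z Hz eps He) as [alp [Ha H]].
  exists alp; split; auto. intros x [_ Hx]. simpl in *. unfold R_dist in *.
  rewrite (clamp_id a b z Hz). apply H. split. apply clamp_in; auto.
  eapply Rle_lt_trans. apply clamp_lip; auto. auto.
Qed.

Lemma clamp_der f df a b c : a < c < b ->
  (forall x, a < x < b -> derivable_pt_lim f x (df x)) ->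
  derivable_pt_lim (fun t => f (Rmax a (Rmin b t))) c (df c).
Proof.
  intros Hc Hd eps He. destruct (Hd c Hc eps He) as [d Hdd].
  assert (Hp : 0 < Rmin d (Rmin (c - a) (b - c))).
  { destruct d as [d dp]; simpl. repeat apply Rmin_pos; lra. }
  exists (mkposreal _ Hp). intros h0 Hh0 Hab. simpl in Hab.
  assert (H1 : Rabs h0 < d) by (eapply Rlt_le_trans; [apply Hab| apply Rmin_l]).
  assert (H2 : Rabs h0 < Rmin (c - a) (b - c)) by (eapply Rlt_le_trans; [apply Hab| apply Rmin_r]).
  assert (H3 : Rabs h0 < c - a) by (eapply Rlt_le_trans; [apply H2| apply Rmin_l]).
  assert (H4 : Rabs h0 < b - c) by (eapply Rlt_le_trans; [apply H2| apply Rmin_r]).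
  rewrite (clamp_id a b c) by lra.
  rewrite (clamp_id a b (c + h0)).
  2:{ revert H3 H4; unfold Rabs; destruct Rcase_abs; lra. }
  apply Hdd; auto.
Qed.

Lemma mvt_C1 f df a b : C1_on f df a b -> forall x y, a <= x -> x < y -> y <= b ->
  exists c, x < c < y /\ f y - f x = df c * (y - x).
Proof.
  intros [Hc [_ Hd]] x y Hax Hxy Hyb.
  set (fc := fun t => f (Rmax a (Rmin b t))).
  assert (pr1 : forall c, x < c < y -> derivable_pt fc c).
  { intros c Hc'. exists (df c). apply clamp_der; auto; lra. }
  destruct (MVT fc id x y pr1 (fun c _ => derivable_pt_id c) Hxy) as [c [P E]].
  - intros c Hc'. apply clamp_cont; auto; lra.
  - intros c Hc'. apply derivable_continuous_pt, derivable_pt_id.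
  - exists c. split; auto.
    rewrite derive_pt_id in E.
    rewrite (derive_pt_eq_0 fc c (df c) (pr1 c P)) in E.
    2:{ apply clamp_der; auto; lra. }
    unfold fc, id in E. rewrite !clamp_id in E by lra. lra.
Qed.

Lemma sup_bound f a b n x : is_supnorm f a b n -> a <= x <= b -> Rabs (f x) <= n.
Proof. intros [H _] Hx. apply H. exists x; auto. Qed.

Lemma dec_lip f df a b n : C1_on f df a b -> (forall x, a <= x <= b -> df x <= 0) ->
  is_supnorm df a b n -> forall x y, a <= x -> x <= y -> y <= b ->
  0 <= f x - f y <= n * (y - x).
Proof.
  intros H1 H2 H3 x y Hx Hxy Hy. destruct (Req_dec x y) as [->|Hne].
  - assert (0 <= n) by (eapply Rle_trans; [apply Rabs_pos| apply (sup_bound df a b n y)]; auto; lra).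
    lra.
  - destruct (mvt_C1 f df a b H1 x y Hx ltac:(lra) Hy) as [c [Hc E]].
    assert (Hd : df c <= 0) by (apply H2; lra).
    assert (Hn : Rabs (df c) <= n) by (apply (sup_bound df a b); auto; lra).
    rewrite Rabs_left1 in Hn by lra. split; nra.
Qed.

Lemma inc_lip f df a b n : C1_on f df a b -> (forall x, a <= x <= b -> 0 <= df x) ->
  is_supnorm df a b n -> forall x y, a <= x -> x <= y -> y <= b ->
  0 <= f y - f x <= n * (y - x).
Proof.
  intros H1 H2 H3 x y Hx Hxy Hy. destruct (Req_dec x y) as [->|Hne].
  - assert (0 <= n) by (eapply Rle_trans; [apply Rabs_pos| apply (sup_bound df a b n y)]; auto; lra).
    lra.
  - destruct (mvt_C1 f df a b H1 x y Hx ltac:(lra) Hy) as [c [Hc E]].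
    assert (Hd : 0 <= df c) by (apply H2; lra).
    assert (Hn : Rabs (df c) <= n) by (apply (sup_bound df a b); auto; lra).
    rewrite Rabs_right in Hn by lra. split; nra.
Qed.

Lemma rsum_ext n f g : (forall i, (i < n)%nat -> f i = g i) -> rsum n f = rsum n g.
Proof. induction n; simpl; intros; auto. rewrite IHn by (intros; apply H; lia). rewrite H by lia. auto. Qed.

Lemma rsum_le n f g : (forall i, (i < n)%nat -> f i <= g i) -> rsum n f <= rsum n g.
Proof. induction n; simpl; intros; try lra. pose proof (H n ltac:(lia)). assert (rsum n f <= rsum n g) by (apply IHn; intros; apply H; lia). lra. Qed.

Lemma rsum_plus n f g : rsum n (fun i => f i + g i) = rsum n f + rsum n g.
Proof. induction n; simpl; lra. Qed.

Lemma rsum_minus n f g : rsum n (fun i => f i - g i) = rsum n f - rsum n g.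
Proof. induction n; simpl; lra. Qed.

Lemma rsum_scal n c f : rsum n (fun i => c * f i) = c * rsum n f.
Proof. induction n; simpl; lra. Qed.

Lemma rsum_swap n m F : rsum n (fun k => rsum m (fun i => F k i)) = rsum m (fun i => rsum n (fun k => F k i)).
Proof. induction n; simpl. induction m; simpl; lra. rewrite IHn, <- rsum_plus. auto. Qed.

Lemma rsum_nonneg n f : (forall i, (i < n)%nat -> 0 <= f i) -> 0 <= rsum n f.
Proof. intros. replace 0 with (rsum n (fun _ => 0)). apply rsum_le; auto. induction n; simpl; auto. rewrite IHn; try lra. intros; apply H; lia. Qed.

Lemma tele_lo N (W q : nat -> R) m : (1 <= N)%nat ->
  (forall k, (S k < N)%nat -> W (S k) <= W k) -> (forall k, (k < N)%nat -> 0 <= W k) ->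
  (forall k, (1 <= k <= N)%nat -> m <= q k) ->
  W 0%nat * (m - q 0%nat) <= rsum N (fun k => W k * (q (S k) - q k)).
Proof.
  intros HN HW HW0 Hq.
  assert (C : forall n, (1 <= n <= N)%nat ->
    W (pred n) * (q n - m) + W 0%nat * (m - q 0%nat) <= rsum n (fun k => W k * (q (S k) - q k))).
  { induction n; intros Hn; [lia|]. destruct n as [|n].
    - simpl. lra.
    - specialize (IHn ltac:(lia)). simpl in *.
      assert (0 <= (W n - W (S n)) * (q (S n) - m)).
      { apply Rmult_le_pos. specialize (HW n ltac:(lia)); lra. specialize (Hq (S n) ltac:(lia)); lra. }
      lra. }
  specialize (C N ltac:(lia)).
  assert (0 <= W (pred N) * (q N - m)).
  { apply Rmult_le_pos. apply HW0; lia. specialize (Hq N ltac:(lia)); lra. }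
  lra.
Qed.

Lemma tele_hi N (W q : nat -> R) M : (1 <= N)%nat ->
  (forall k, (S k < N)%nat -> W (S k) <= W k) -> (forall k, (k < N)%nat -> 0 <= W k) ->
  (forall k, (1 <= k <= N)%nat -> q k <= M) ->
  rsum N (fun k => W k * (q (S k) - q k)) <= W 0%nat * (M - q 0%nat).
Proof.
  intros HN HW HW0 Hq.
  assert (C : forall n, (1 <= n <= N)%nat ->
    rsum n (fun k => W k * (q (S k) - q k)) <= W 0%nat * (M - q 0%nat) - W (pred n) * (M - q n)).
  { induction n; intros Hn; [lia|]. destruct n as [|n].
    - simpl. lra.
    - specialize (IHn ltac:(lia)). simpl in *.
      assert (0 <= (W n - W (S n)) * (M - q (S n))).
      { apply Rmult_le_pos. specialize (HW n ltac:(lia)); lra. specialize (Hq (S n) ltac:(lia)); lra. }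
      lra. }
  specialize (C N ltac:(lia)).
  assert (0 <= W (pred N) * (M - q N)).
  { apply Rmult_le_pos. apply HW0; lia. specialize (Hq N ltac:(lia)); lra. }
  lra.
Qed.

Lemma rsum_scal_r n c f : rsum n (fun i => f i * c) = rsum n f * c.
Proof. induction n; simpl; lra. Qed.

Lemma avg_bound N Rn h (Wf rf : nat -> nat -> R) lo hi : 0 < h ->
  h * rsum N (fun k => rsum Rn (fun i => Wf k i)) = 1 ->
  (forall k i, (k < N)%nat -> (i < Rn)%nat -> 0 <= Wf k i) ->
  (forall k i, (k < N)%nat -> (i < Rn)%nat -> lo <= rf k i <= hi) ->
  lo <= h * rsum N (fun k => rsum Rn (fun i => Wf k i * rf k i)) <= hi.
Proof.
  intros Hh Hs HW Hr.
  assert (E : forall c, h * rsum N (fun k => rsum Rn (fun i => Wf k i * c)) = c).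
  { intros c. rewrite (rsum_ext N _ (fun k => rsum Rn (fun i => Wf k i) * c)).
    rewrite rsum_scal_r. rewrite <- Rmult_assoc, Hs. ring.
    intros; apply rsum_scal_r. }
  split.
  - rewrite <- (E lo) at 1. apply Rmult_le_compat_l; [lra|]. apply rsum_le; intros k Hk.
    apply rsum_le; intros i Hi. apply Rmult_le_compat_l. auto. apply Hr; auto.
  - rewrite <- (E hi). apply Rmult_le_compat_l; [lra|]. apply rsum_le; intros k Hk.
    apply rsum_le; intros i Hi. apply Rmult_le_compat_l. auto. apply Hr; auto.
Qed.

Lemma diff_bounds N Rn (W q : nat -> nat -> R) (c : nat -> R) m M : (1 <= N)%nat ->
  (forall i k, (i < Rn)%nat -> (S k < N)%nat -> W i (S k) <= W i k) ->
  (forall i k, (i < Rn)%nat -> (k < N)%nat -> 0 <= W i k) ->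
  (forall i, (i < Rn)%nat -> W i 0%nat <= c i) ->
  (forall i k, (i < Rn)%nat -> (k <= N)%nat -> m <= q i k <= M) ->
  rsum Rn (fun i => c i * (m - q i 0%nat)) <=
    rsum N (fun k => rsum Rn (fun i => W i k * q i (S k))) -
    rsum N (fun k => rsum Rn (fun i => W i k * q i k)) <=
  rsum Rn (fun i => c i * (M - q i 0%nat)).
Proof.
  intros HN HW HW0 Hc Hq.
  assert (E : rsum N (fun k => rsum Rn (fun i => W i k * q i (S k))) -
    rsum N (fun k => rsum Rn (fun i => W i k * q i k)) =
    rsum Rn (fun i => rsum N (fun k => W i k * (q i (S k) - q i k)))).
  { rewrite <- rsum_minus, <- rsum_swap. apply rsum_ext; intros k _.
    rewrite <- rsum_minus. apply rsum_ext; intros; ring. }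
  assert (T1 : forall i, (i < Rn)%nat -> (forall k, (S k < N)%nat -> W i (S k) <= W i k)) by (intros; apply HW; auto).
  assert (T2 : forall i, (i < Rn)%nat -> (forall k, (k < N)%nat -> 0 <= W i k)) by (intros; apply HW0; auto).
  assert (T3 : forall i, (i < Rn)%nat -> (forall k, (1 <= k <= N)%nat -> m <= q i k)) by (intros i Hi k Hk; apply (proj1 (Hq i k Hi ltac:(lia)))).
  assert (T4 : forall i, (i < Rn)%nat -> (forall k, (1 <= k <= N)%nat -> q i k <= M)) by (intros i Hi k Hk; apply (proj2 (Hq i k Hi ltac:(lia)))).
  rewrite E. split; apply rsum_le; intros i Hi.
  - pose proof (tele_lo N (W i) (q i) m HN (T1 i Hi) (T2 i Hi) (T3 i Hi)).
    pose proof (Hq i 0%nat Hi ltac:(lia)). pose proof (Hc i Hi). nra.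
  - pose proof (tele_hi N (W i) (q i) M HN (T1 i Hi) (T2 i Hi) (T4 i Hi)).
    pose proof (Hq i 0%nat Hi ltac:(lia)). pose proof (Hc i Hi). nra.
Qed.

Lemma dec_mono f df a b : C1_on f df a b -> (forall x, a <= x <= b -> df x <= 0) ->
  forall x y, a <= x -> x <= y -> y <= b -> f y <= f x.
Proof.
  intros H1 H2 x y Hx Hxy Hy. destruct (Req_dec x y) as [->|Hne]; [lra|].
  destruct (mvt_C1 f df a b H1 x y Hx ltac:(lra) Hy) as [c [Hc E]].
  assert (df c <= 0) by (apply H2; lra). nra.
Qed.

Theorem theorem3p1
  (rho_max eta : R) (g dg v dv w dw : R -> R)
  (ng ndg nv ndv : R)
  (rho_m rho_M : R) (h tau x0 : R) (N Rn : nat) (gam y : nat -> R)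
  (rbar : Z -> R) (P : Z -> list R)
  (* standing assumptions (A) *)
  (Hrmax : 0 < rho_max) (Heta : 0 < eta)
  (Hg : C1_on g dg 0 rho_max)
  (Hg0 : forall x, 0 <= x <= rho_max -> 0 <= g x)
  (Hdg : forall x, 0 <= x <= rho_max -> 0 <= dg x)
  (Hv : C1_on v dv 0 rho_max)
  (Hv0 : forall x, 0 <= x <= rho_max -> 0 <= v x)
  (Hdv : forall x, 0 <= x <= rho_max -> dv x <= 0)
  (Hw : C1_on w dw 0 eta)
  (Hw0 : forall x, 0 <= x <= eta -> 0 <= w x)
  (Hdw : forall x, 0 <= x <= eta -> dw x <= 0)
  (Hwint : exists pr : Riemann_integrable w 0 eta, RiemannInt pr = 1)
  (* sup norms on [0, rho_max] *)
  (Hng : is_supnorm g 0 rho_max ng)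
  (Hndg : is_supnorm dg 0 rho_max ndg)
  (Hnv : is_supnorm v 0 rho_max nv)
  (Hndv : is_supnorm dv 0 rho_max ndv)
  (* bounds *)
  (Hm : 0 <= rho_m) (HmM : rho_m <= rho_M) (HM : rho_M <= rho_max)
  (* grid *)
  (Hh : 0 < h) (HNh : INR N * h = eta)
  (* quadrature rule, nodes/weights indexed 1..Rn *)
  (HRn : (1 <= Rn)%nat)
  (Hy : forall nu, (1 <= nu <= Rn)%nat -> 0 <= y nu <= 1)
  (HyR : y Rn = 1)
  (Hgam : forall nu, (1 <= nu <= Rn)%nat -> 0 < gam nu)
  (Hgamsum : rsum Rn (fun i => gam (S i)) = 1)
  (Hquadw : h * rsum N (fun k => rsum Rn (fun i =>
              gam (S i) * w ((INR k + y (S i)) * h))) = 1)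
  (* cell averages at time t^n *)
  (Hrbar : forall j, rho_m <= rbar j <= rho_M)
  (* reconstruction: average, quadrature exactness, bounded values *)
  (HP : forall l : Z,
      exists pr : Riemann_integrable (peval (P l))
                    (xmid x0 h l - h / 2) (xmid x0 h l + h / 2),
        RiemannInt pr / h = rbar l /\
        RiemannInt pr / h = rsum Rn (fun i => gam (S i) * recon x0 h y P l (S i)))
  (HPval : forall (l : Z) (nu : nat), (1 <= nu <= Rn)%nat ->
      rho_m <= recon x0 h y P l nu <= rho_M)
  (* time step and CFL condition, written multiplicatively
     (tau <= gam_R h / D  with D >= 0; D = 0 means no restriction) *)
  (Htau : 0 < tau)
  (HCFL : tau * (gam Rn * h * w 0 * ndv * ng + nv * ndg) <= gam Rn * h) :
  forall j : Z,
    rho_m <= euler_update g v w h tau N Rn gam y x0 P rbar j <= rho_M.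
Proof.
  intros j.
  assert (HN : (1 <= N)%nat).
  { destruct N; [simpl in HNh; lra | lia]. }
  assert (Hsup0 : forall f n, is_supnorm f 0 rho_max n -> 0 <= n).
  { intros f n Hf. eapply Rle_trans; [apply Rabs_pos | apply (sup_bound f 0 rho_max n 0 Hf)]; lra. }
  pose proof (Hsup0 _ _ Hng) as ng0. pose proof (Hsup0 _ _ Hndg) as ndg0.
  pose proof (Hsup0 _ _ Hnv) as nv0. pose proof (Hsup0 _ _ Hndv) as ndv0.
  assert (Hwmono : forall s t, 0 <= s -> s <= t -> t <= eta -> w t <= w s)
    by (intros; eapply dec_mono; eauto).
  assert (w00 : 0 <= w 0) by (apply Hw0; lra).
  set (W := fun i k => gam (S i) * w ((INR k + y (S i)) * h)).
  set (q := fun i k => recon x0 h y P (j + Z.of_nat k)%Z (S i)).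
  set (c := fun i => gam (S i) * w 0).
  assert (Hpos : forall i k, (i < Rn)%nat -> (k < N)%nat ->
     0 <= (INR k + y (S i)) * h /\ (INR (S k) + y (S i)) * h <= INR N * h + h /\
     (INR k + y (S i)) * h <= eta).
  { intros i k Hi Hk. pose proof (Hy (S i) ltac:(lia)).
    assert (INR (S k) <= INR N) by (apply le_INR; lia).
    pose proof (pos_INR k). rewrite S_INR in *. rewrite <- HNh. nra. }
  assert (HW : forall i k, (i < Rn)%nat -> (S k < N)%nat -> W i (S k) <= W i k).
  { intros i k Hi Hk. unfold W. apply Rmult_le_compat_l.
    pose proof (Hgam (S i) ltac:(lia)); lra.
    destruct (Hpos i (S k) Hi Hk) as [_ [_ H3]]. destruct (Hpos i k Hi ltac:(lia)) as [H4 _].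
    apply Hwmono; auto. rewrite S_INR. nra. }
  assert (HW0 : forall i k, (i < Rn)%nat -> (k < N)%nat -> 0 <= W i k).
  { intros i k Hi Hk. unfold W. apply Rmult_le_pos.
    pose proof (Hgam (S i) ltac:(lia)); lra.
    destruct (Hpos i k Hi Hk) as [H3 [_ H4]]. apply Hw0; auto. }
  assert (Hc : forall i, (i < Rn)%nat -> W i 0%nat <= c i).
  { intros i Hi. unfold W, c. apply Rmult_le_compat_l.
    pose proof (Hgam (S i) ltac:(lia)); lra.
    destruct (Hpos i 0%nat Hi HN) as [H3 [_ H4]]. apply Hwmono; auto; lra. }
  assert (Hq : forall i k, (i < Rn)%nat -> (k <= N)%nat -> rho_m <= q i k <= rho_M).
  { intros; unfold q; apply HPval; lia. }
  destruct (diff_bounds N Rn W q c rho_m rho_M HN HW HW0 Hc Hq) as [D1 D2].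
  set (Ap := h * rsum N (fun k => rsum Rn (fun i => W i k * q i (S k)))).
  set (Am := h * rsum N (fun k => rsum Rn (fun i => W i k * q i k))).
  assert (EVp : Vface v w h N Rn gam y x0 P j = v Ap).
  { unfold Vface, Ap. f_equal. f_equal. apply rsum_ext; intros k _. apply rsum_ext; intros i _.
    unfold W, q. replace (j + Z.of_nat (S k))%Z with (j + Z.of_nat k + 1)%Z by lia. ring. }
  assert (EVm : Vface v w h N Rn gam y x0 P (j - 1)%Z = v Am).
  { unfold Vface, Am. f_equal. f_equal. apply rsum_ext; intros k _. apply rsum_ext; intros i _.
    unfold W, q. replace (j - 1 + Z.of_nat k + 1)%Z with (j + Z.of_nat k)%Z by lia. ring. }
  set (a := recon x0 h y P j Rn).
  set (b := recon x0 h y P (j - 1)%Z Rn).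
  assert (Ea : peval (P j) (xhalf x0 h j) = a).
  { unfold a, recon, xhalf. f_equal. rewrite HyR. lra. }
  assert (Eb : peval (P (j - 1)%Z) (xhalf x0 h (j - 1)%Z) = b).
  { unfold b, recon, xhalf. f_equal. rewrite HyR. lra. }
  unfold euler_update. rewrite EVp, EVm, Ea, Eb.
  assert (HAp : rho_m <= Ap <= rho_M).
  { apply (avg_bound N Rn h (fun k i => W i k) (fun k i => q i (S k))); auto.
    all: try (intros; apply Hq; lia). }
  assert (HAm : rho_m <= Am <= rho_M).
  { apply (avg_bound N Rn h (fun k i => W i k) (fun k i => q i k)); auto.
    all: try (intros; apply Hq; lia). }
  destruct (HP j) as [pr [HP1 HP2]].
  assert (Hrb : rbar j = rsum Rn (fun i => gam (S i) * recon x0 h y P j (S i))) by congruence.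
  assert (Hq0 : forall i, q i 0%nat = recon x0 h y P j (S i)).
  { intros; unfold q. simpl. rewrite Z.add_0_r. auto. }
  assert (ES : forall z, rsum Rn (fun i => c i * (z - q i 0%nat)) = w 0 * (z - rbar j)).
  { intros z. rewrite Hrb.
    rewrite (rsum_ext Rn _ (fun i => (w 0 * z) * gam (S i) - w 0 * (gam (S i) * recon x0 h y P j (S i)))).
    rewrite rsum_minus, !rsum_scal, Hgamsum. ring.
    intros; unfold c; rewrite Hq0; ring. }
  rewrite ES in D1, D2.
  assert (HSa : gam Rn * (a - rho_m) <= rbar j - rho_m /\ gam Rn * (rho_M - a) <= rho_M - rbar j).
  { destruct Rn as [|R'] eqn:ER; [lia|].
    assert (E1 : rbar j - rho_m = rsum (S R') (fun i => gam (S i) * (recon x0 h y P j (S i) - rho_m))).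
    { rewrite Hrb. rewrite (rsum_ext _ (fun i => gam (S i) * (recon x0 h y P j (S i) - rho_m)) (fun i => gam (S i) * recon x0 h y P j (S i) - rho_m * gam (S i))).
      rewrite rsum_minus, rsum_scal, Hgamsum. ring. intros; ring. }
    assert (E2 : rho_M - rbar j = rsum (S R') (fun i => gam (S i) * (rho_M - recon x0 h y P j (S i)))).
    { rewrite Hrb. rewrite (rsum_ext _ (fun i => gam (S i) * (rho_M - recon x0 h y P j (S i))) (fun i => rho_M * gam (S i) - gam (S i) * recon x0 h y P j (S i))).
      rewrite rsum_minus, rsum_scal, Hgamsum. ring. intros; ring. }
    rewrite E1, E2. simpl. unfold a.
    split.
    - assert (0 <= rsum R' (fun i => gam (S i) * (recon x0 h y P j (S i) - rho_m))).
      { apply rsum_nonneg; intros i Hi. pose proof (Hgam (S i) ltac:(lia)).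
        pose proof (HPval j (S i) ltac:(lia)). nra. }
      lra.
    - assert (0 <= rsum R' (fun i => gam (S i) * (rho_M - recon x0 h y P j (S i)))).
      { apply rsum_nonneg; intros i Hi. pose proof (Hgam (S i) ltac:(lia)).
        pose proof (HPval j (S i) ltac:(lia)). nra. }
      lra. }
  assert (Ha : rho_m <= a <= rho_M) by (apply HPval; lia).
  assert (Hb : rho_m <= b <= rho_M) by (apply HPval; lia).
  assert (Hrbj := Hrbar j).
  assert (gR : 0 < gam Rn) by (apply Hgam; lia).
  assert (Bv : forall x, 0 <= x <= rho_max -> 0 <= v x <= nv).
  { intros x Hx. split. auto. pose proof (sup_bound v 0 rho_max nv x Hnv Hx).
    rewrite Rabs_right in H by (apply Rle_ge, Hv0; auto). auto. }
  assert (Bg : forall x, 0 <= x <= rho_max -> 0 <= g x <= ng).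
  { intros x Hx. split. auto. pose proof (sup_bound g 0 rho_max ng x Hng Hx).
    rewrite Rabs_right in H by (apply Rle_ge, Hg0; auto). auto. }
  pose proof (Bv Ap ltac:(lra)) as BvAp. pose proof (Bv Am ltac:(lra)) as BvAm.
  pose proof (Bg a ltac:(lra)) as Bga. pose proof (Bg b ltac:(lra)) as Bgb.
  set (Sd := rbar j - rho_m). set (Td := rho_M - rbar j).
  assert (E1 : v Ap * (g a - g b) <= nv * ndg * (a - rho_m)).
  { destruct (Rle_lt_dec b a).
    - pose proof (inc_lip g dg 0 rho_max ndg Hg Hdg Hndg b a ltac:(lra) r ltac:(lra)).
      assert (ndg * (a - b) <= ndg * (a - rho_m)) by (apply Rmult_le_compat_l; lra).
      assert (g a - g b <= ndg * (a - rho_m)) by lra.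
      assert (v Ap * (g a - g b) <= nv * (g a - g b)) by (apply Rmult_le_compat_r; lra).
      assert (nv * (g a - g b) <= nv * (ndg * (a - rho_m))) by (apply Rmult_le_compat_l; lra).
      lra.
    - pose proof (inc_lip g dg 0 rho_max ndg Hg Hdg Hndg a b ltac:(lra) ltac:(lra) ltac:(lra)).
      assert (0 <= v Ap * (g b - g a)) by (apply Rmult_le_pos; lra).
      assert (0 <= nv * ndg * (a - rho_m)) by (repeat apply Rmult_le_pos; lra). lra. }
  assert (E1' : - (nv * ndg * (rho_M - a)) <= v Ap * (g a - g b)).
  { destruct (Rle_lt_dec b a).
    - pose proof (inc_lip g dg 0 rho_max ndg Hg Hdg Hndg b a ltac:(lra) r ltac:(lra)).
      assert (0 <= v Ap * (g a - g b)) by (apply Rmult_le_pos; lra).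
      assert (0 <= nv * ndg * (rho_M - a)) by (repeat apply Rmult_le_pos; lra). lra.
    - pose proof (inc_lip g dg 0 rho_max ndg Hg Hdg Hndg a b ltac:(lra) ltac:(lra) ltac:(lra)).
      assert (ndg * (b - a) <= ndg * (rho_M - a)) by (apply Rmult_le_compat_l; lra).
      assert (g b - g a <= ndg * (rho_M - a)) by lra.
      assert (v Ap * (g b - g a) <= nv * (g b - g a)) by (apply Rmult_le_compat_r; lra).
      assert (nv * (g b - g a) <= nv * (ndg * (rho_M - a))) by (apply Rmult_le_compat_l; lra).
      lra. }
  assert (hw0 : 0 <= h * w 0) by nra.
  set (DP := rsum N (fun k => rsum Rn (fun i => W i k * q i (S k)))) in *.
  set (DM := rsum N (fun k => rsum Rn (fun i => W i k * q i k))) in *.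
  assert (EAd : Ap - Am = h * (DP - DM)) by (unfold Ap, Am; ring).
  assert (Hlo : h * (w 0 * (rho_m - rbar j)) <= h * (DP - DM)) by (apply Rmult_le_compat_l; lra).
  assert (Hhi : h * (DP - DM) <= h * (w 0 * (rho_M - rbar j))) by (apply Rmult_le_compat_l; lra).
  assert (E2 : g b * (v Ap - v Am) <= ng * ndv * (h * w 0 * Sd)).
  { assert (Sd0 : 0 <= Sd) by (unfold Sd; lra).
    assert (0 <= ng * ndv * (h * w 0 * Sd)) by (repeat apply Rmult_le_pos; lra).
    destruct (Rle_lt_dec Am Ap).
    - pose proof (dec_lip v dv 0 rho_max ndv Hv Hdv Hndv Am Ap ltac:(lra) r ltac:(lra)).
      assert (0 <= g b * (v Am - v Ap)) by (apply Rmult_le_pos; lra). lra.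
    - pose proof (dec_lip v dv 0 rho_max ndv Hv Hdv Hndv Ap Am ltac:(lra) ltac:(lra) ltac:(lra)).
      assert (Am - Ap <= h * w 0 * Sd) by (unfold Sd; lra).
      assert (ndv * (Am - Ap) <= ndv * (h * w 0 * Sd)) by (apply Rmult_le_compat_l; lra).
      assert (g b * (v Ap - v Am) <= ng * (v Ap - v Am)) by (apply Rmult_le_compat_r; lra).
      assert (ng * (v Ap - v Am) <= ng * (ndv * (h * w 0 * Sd))) by (apply Rmult_le_compat_l; lra).
      lra. }
  assert (E2' : - (ng * ndv * (h * w 0 * Td)) <= g b * (v Ap - v Am)).
  { assert (Td0 : 0 <= Td) by (unfold Td; lra).
    assert (0 <= ng * ndv * (h * w 0 * Td)) by (repeat apply Rmult_le_pos; lra).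
    destruct (Rle_lt_dec Ap Am).
    - pose proof (dec_lip v dv 0 rho_max ndv Hv Hdv Hndv Ap Am ltac:(lra) r ltac:(lra)).
      assert (0 <= g b * (v Ap - v Am)) by (apply Rmult_le_pos; lra). lra.
    - pose proof (dec_lip v dv 0 rho_max ndv Hv Hdv Hndv Am Ap ltac:(lra) ltac:(lra) ltac:(lra)).
      assert (Ap - Am <= h * w 0 * Td) by (unfold Td; lra).
      assert (ndv * (Ap - Am) <= ndv * (h * w 0 * Td)) by (apply Rmult_le_compat_l; lra).
      assert (g b * (v Am - v Ap) <= ng * (v Am - v Ap)) by (apply Rmult_le_compat_r; lra).
      assert (ng * (v Am - v Ap) <= ng * (ndv * (h * w 0 * Td))) by (apply Rmult_le_compat_l; lra).
      lra. }
  set (X := v Ap * g a - v Am * g b).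
  assert (EX : X = v Ap * (g a - g b) + g b * (v Ap - v Am)) by (unfold X; ring).
  set (K := gam Rn * h * w 0 * ndv * ng + nv * ndg).
  assert (K0 : 0 <= nv * ndg) by nra.
  assert (K1 : 0 <= ng * ndv * (h * w 0)) by (apply Rmult_le_pos; nra).
  destruct HSa as [HSa1 HSa2]. fold Sd in HSa1. fold Td in HSa2.
  replace (tau / h * X) with (tau * X / h) by (field; lra).
  split.
  -
    assert (gam Rn * (tau * X) <= gam Rn * (h * Sd)).
    { assert (X <= nv * ndg * (a - rho_m) + ng * ndv * (h * w 0 * Sd)) by lra.
      assert (gam Rn * X <= nv * ndg * Sd + gam Rn * (ng * ndv * (h * w 0 * Sd))) by nra.
      assert (tau * (gam Rn * X) <= tau * (nv * ndg * Sd + gam Rn * (ng * ndv * (h * w 0 * Sd)))) by nra.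
      assert (tau * (nv * ndg * Sd + gam Rn * (ng * ndv * (h * w 0 * Sd))) = Sd * (tau * K)) by (unfold K; ring).
      assert (Sd * (tau * K) <= Sd * (gam Rn * h)) by (apply Rmult_le_compat_l; [unfold Sd; lra | unfold K; exact HCFL]).
      nra. }
    assert (tau * X <= h * Sd) by nra.
    assert (tau * X / h <= Sd) by (apply Rmult_le_reg_r with h; [lra|]; field_simplify; lra).
    unfold Sd in *; lra.
  - assert (gam Rn * (- (tau * X)) <= gam Rn * (h * Td)).
    { assert (- X <= nv * ndg * (rho_M - a) + ng * ndv * (h * w 0 * Td)) by lra.
      assert (gam Rn * - X <= nv * ndg * Td + gam Rn * (ng * ndv * (h * w 0 * Td))) by nra.
      assert (tau * (gam Rn * - X) <= tau * (nv * ndg * Td + gam Rn * (ng * ndv * (h * w 0 * Td)))) by nra.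
      assert (tau * (nv * ndg * Td + gam Rn * (ng * ndv * (h * w 0 * Td))) = Td * (tau * K)) by (unfold K; ring).
      assert (Td * (tau * K) <= Td * (gam Rn * h)) by (apply Rmult_le_compat_l; [unfold Td; lra | unfold K; exact HCFL]).
      nra. }
    assert (- (tau * X) <= h * Td) by nra.
    assert (- (tau * X / h) <= Td) by (apply Rmult_le_reg_r with h; [lra|]; field_simplify; lra).
    unfold Td in *; lra.
Qed.
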